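(* Let $n>1$, let $K\subseteq\mathbb{R}^n$ be a pointed closed convex cone with nonempty interior inducing the partial order $x\preceq y\iff y-x\in K$, and let $Y$ be a nonempty open subset of $\mathbb{R}^n$ equipped with the relative Euclidean topology $\tau$ and the restriction of $\preceq$. Then $(Y,\tau,\preceq)$ is a partially ordered topological space and the canonical map $y\mapsto y^\downarrow$ topologically order-embeds $(Y,\tau,\preceq)$ in $(C(Y),\tau_F,\subseteq)$.
   Context: A partially ordered topological space is a topological space with a partial order whose graph is closed in the product. For $y\in Y$, $y^\downarrow=\{u\in Y:u\preceq y\}$ (taken inside $Y$). $C(Y)$ = closed subsets of $Y$, $C^\downarrow(Y)=\{y^\downarrow:y\in Y\}$. The Fell topology $\tau_F$ on $C(Y)$ is generated by the sets $\{A\in C(Y):A\cap O\neq\emptyset\}$ ($O\subseteq Y$ open) and $\{A\in C(Y):A\cap D=\emptyset\}$ ($D\subseteq Y$ compact). ''Topologically order-embeds'' means: $x\preceq y\iff x^\downarrow\subseteq y^\downarrow$, and $y\mapsto y^\downarrow$ is a homeomorphism from $(Y,\tau)$ onto $C^\downarrow(Y)$ with the relative Fell topology. *)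

(* Defs.v *)
(* R^n is 'rV[R]_n with its canonical (product =
   Euclidean) topology, R : realType. *)
From HB Require Import structures.
From mathcomp Require Import all_boot all_order all_algebra.
From mathcomp Require Import all_classical all_reals all_analysis.
Set Implicit Arguments. Unset Strict Implicit. Unset Printing Implicit Defensive.
Import Order.TTheory GRing.Theory Num.Theory.
Import numFieldNormedType.Exports.
Local Open Scope classical_set_scope.
Local Open Scope ring_scope.

Section Defs.
Variables (R : realType) (n : nat).
Local Notation V := 'rV[R]_n.

Definition convex_cone (K : set V) : Prop :=
  (forall x y, K x -> K y -> forall t : R, 0 <= t -> t <= 1 ->
     K ((1 - t) *: x + t *: y)) /\
  (forall x, K x -> forall t : R, 0 < t -> K (t *: x)).

Definition pointed (K : set V) : Prop := forall x, K x -> K (- x) -> x = 0.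

Definition cone_le (K : set V) (x y : V) : Prop := K (y - x).

Definition down (K Y : set V) (y : V) : set V := [set u | Y u /\ cone_le K u y].

Definition rel_open (Y A : set V) : Prop := exists O : set V, open O /\ A = O `&` Y.
Definition rel_closed (Y A : set V) : Prop := exists F : set V, closed F /\ A = F `&` Y.

Definition CY (Y : set V) : set (set V) := [set A | rel_closed Y A].
Definition Cdown (K Y : set V) : set (set V) :=
  [set A | exists y, Y y /\ A = down K Y y].

(* subbasic sets of the Fell topology on C(Y); compact subsets of the
   subspace Y are exactly the compact subsets of R^n contained in Y *)
Definition fell_subbasic (Y : set V) (S : set (set V)) : Prop :=
  (exists O : set V, rel_open Y O /\ S = [set A | CY Y A /\ A `&` O !=set0]) \/
  (exists D : set V, compact D /\ D `<=` Y /\ S = [set A | CY Y A /\ A `&` D = set0]).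

Definition fell_open (Y : set V) (U : set (set V)) : Prop :=
  U `<=` CY Y /\
  forall A, U A -> exists (k : nat) (S : 'I_k -> set (set V)),
    (forall i, fell_subbasic Y (S i)) /\
    (forall i, S i A) /\
    [set B | CY Y B /\ forall i, S i B] `<=` U.

Definition rel_fell_open (K Y : set V) (W : set (set V)) : Prop :=
  exists U, fell_open Y U /\ W = U `&` Cdown K Y.

Definition is_POTS (K Y : set V) : Prop :=
  (forall x, Y x -> cone_le K x x) /\
  (forall x y, Y x -> Y y -> cone_le K x y -> cone_le K y x -> x = y) /\
  (forall x y z, Y x -> Y y -> Y z -> cone_le K x y -> cone_le K y z ->
     cone_le K x z) /\
  (exists G : set (V * V), closed G /\
     [set p | Y p.1 /\ Y p.2 /\ cone_le K p.1 p.2] = G `&` (Y `*` Y)).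

Definition topo_order_embeds (K Y : set V) : Prop :=
  (forall y, Y y -> CY Y (down K Y y)) /\
  (forall x y, Y x -> Y y -> (cone_le K x y <-> down K Y x `<=` down K Y y)) /\
  (forall x y, Y x -> Y y -> down K Y x = down K Y y -> x = y) /\
  (forall W, rel_fell_open K Y W -> rel_open Y [set y | Y y /\ W (down K Y y)]) /\
  (forall O, rel_open Y O -> rel_fell_open K Y (down K Y @` O)).

End Defs.

(* Main.v *)
Require Import Defs.
From HB Require Import structures.
From mathcomp Require Import all_boot all_order all_algebra.
From mathcomp Require Import all_classical all_reals all_analysis.
From mathcomp Require Import ring lra.
Import Order.TTheory GRing.Theory Num.Theory.
Import numFieldNormedType.Exports.
Set Implicit Arguments. Unset Strict Implicit. Unset Printing Implicit Defensive.
Local Open Scope classical_set_scope.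
Local Open Scope ring_scope.

Lemma sep (R : realType) n (A B : set 'rV[R]_n) : compact A -> closed B -> A `&` B = set0 ->
  exists2 r : R, 0 < r & forall a b, A a -> B b -> r <= `|a - b|.
Proof.
move=> /compact_near_coveringP cA cB AB.
have Hf : \forall r \near (0:R)^'+, A `<=` (fun x => forall b, B b -> r <= `|x - b|).
  apply: (cA R (0^'+) (fun r x => forall b, B b -> r <= `|x - b|)).
  move=> x Ax.
  have nBx : ~ B x by move=> Bx; have : (A `&` B) x by []; rewrite AB.
  have : nbhs x (~` B) by apply: (closed_openC cB).
  move=> /nbhs_ballP[e /= e0 eB].
  near=> x' i => b Bb.
  rewrite leNgt; apply/negP => lt.
  apply: (eB b) => //.
  rewrite -ball_normE /=.
  have : `|x - x'| < e/2 by near: x'; apply: (nbhs_ballP _ _).2; exists (e/2) => //=; [by rewrite divr_gt0| by move=> z; rewrite -ball_normE].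
  have : i < e/2 by near: i; apply: nbhs_right_lt; rewrite divr_gt0.
  move=> ie xx'; rewrite (splitr e) (le_lt_trans (ler_distD x' _ _)) //.
  by rewrite ltrD // (lt_trans lt).
Unshelve. all: end_near.
case: (filter_ex (filterI (nbhs_right_gt (0:R)) Hf)) => r [r0 Pr].
by exists r => // a b Aa Bb; apply: Pr.
Qed.

Section Cone.
Variables (R : realType) (n : nat) (K : set 'rV[R]_n).
Hypothesis cc : convex_cone K.
Hypothesis cK : closed K.

Lemma K_add x y : K x -> K y -> K (x + y).
Proof.
move=> Kx Ky.
have h : 0 <= (2:R)^-1 <= 1 by rewrite invr_ge0 ler0n /= invf_le1 // ler1n.
case/andP: h => h1 h2.
have := cc.1 x y Kx Ky _ h1 h2.
move/(cc.2 _)/(_ 2 ltac:(by rewrite ltr0n)).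
have -> : 1 - (2:R)^-1 = 2^-1 by rewrite {1}(splitr 1) mul1r addrK.
by rewrite scalerDr !scalerA divff // !scale1r.
Qed.

Lemma K0 x : K x -> K 0.
Proof.
move=> Kx; apply: cK => B /nbhs_ballP[e /= e0 eB].
pose t := e / (2 * (`|x| + 1)).
have t0 : 0 < t by rewrite divr_gt0 // mulr_gt0 // ltr_wpDl.
exists (t *: x); split; first exact: cc.2.
apply: eB; rewrite -ball_normE /= sub0r normrN normrZ gtr0_norm //.
apply: (@le_lt_trans _ _ (t * (`|x| + 1))); first by rewrite ler_pM2l // lerDl.
have a0 : `|x| + 1 != 0 by rewrite gt_eqF // ltr_wpDl.
have -> : t * (`|x| + 1) = e / 2 by rewrite /t; field; rewrite a0.
by rewrite gtr_pMr // invf_lt1 // ltr1n.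
Qed.

Lemma KZ x t : K x -> 0 <= t -> K (t *: x).
Proof.
move=> Kx; rewrite le_eqVlt => /orP[/eqP <-|t0]; first by rewrite scale0r; exact: (K0 Kx).
exact: cc.2.
Qed.

Lemma cone_bound : pointed K -> exists2 r : R, 0 < r &
  forall k1 k2, K k1 -> K k2 -> r * `|k1| <= `|k1 + k2|.
Proof.
move=> pK.
pose A := K `&` [set v | `|v| = 1].
pose B := [set w | K (- w)].
have cA : compact A.
  apply: bounded_closed_compact.
    exists 1; split; first by [].
    by move=> N N1 v [_ nv]; rewrite /= nv ltW.
  apply: closedI => //.
  have := (continuous_closedP (fun v : 'rV[R]_n => `|v|)).1.
  move=> /(_ norm_continuous [set x | x = 1] (@closed_eq _ 1)).
  by [].
have cB : closed B by exact: ((continuous_closedP _).1 opp_continuous _ cK).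
have AB : A `&` B = set0.
  apply/seteqP; split => // v [[Kv /= nv] Bv].
  have v0 := pK v Kv Bv; move: nv; rewrite v0 normr0 => /eqP.
  by rewrite eq_sym oner_eq0.
have [r r0 Hr] := sep cA cB AB.
exists r => // k1 k2 K1 K2.
have [->|k10] := eqVneq k1 0; first by rewrite normr0 mulr0.
have s0 : 0 < `|k1| by rewrite normr_gt0.
have Aa : A (`|k1|^-1 *: k1).
  split; first by apply: KZ; rewrite // invr_ge0.
  by rewrite /= normrZ ger0_norm ?invr_ge0 // mulVf // gt_eqF.
have Bb : B (- (`|k1|^-1 *: k2)).
  by rewrite /B /= opprK; apply: KZ; rewrite // invr_ge0.
have := Hr _ _ Aa Bb.
by rewrite opprK -scalerDr normrZ ger0_norm ?invr_ge0 // mulrC ler_pdivlMr.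
Qed.
End Cone.

Section Main.
Variables (R : realType) (n : nat) (K Y : set 'rV[R]_n).
Hypotheses (cc : convex_cone K) (pK : pointed K) (cK : closed K)
  (iK : interior K !=set0) (oY : open Y).
Local Notation V := 'rV[R]_n.

Lemma Kz : K 0.
Proof. by case: iK => x /interior_subset Kx; exact: (K0 cc cK Kx). Qed.

Lemma nbhsY (y : V) : Y y -> nbhs y Y.
Proof. by move: oY; rewrite openE; apply. Qed.

Lemma closed_down (y : V) : closed [set u : 'rV[R]_n | K (y - u)].
Proof.
have ct : continuous (fun u : V => y - u).
  by move=> u; apply: continuousB => //; apply: cst_continuous.
exact: ((continuous_closedP _).1 ct _ cK).
Qed.

Lemma CY_down (y : V) : CY Y (Defs.down K Y y).
Proof.
exists [set u : 'rV[R]_n | K (y - u)]; split; first exact: closed_down.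
by apply/seteqP; split => u [? ?]; split.
Qed.

Lemma cont_part W : rel_fell_open K Y W -> rel_open Y [set y | Y y /\ W (Defs.down K Y y)].
Proof.
case=> U [[UC HU] ->].
exists [set y | Y y /\ (U `&` Cdown K Y) (Defs.down K Y y)]; split; last first.
  by apply/seteqP; split => [y [Yy Wy]|y [[Yy Wy] _]].
rewrite openE => y [Yy [Uy _]].
have [k [S [Ssub [Sy SU]]]] := HU _ Uy.
have H1 : \forall z \near y, forall i, S i (Defs.down K Y z).
  apply: (@filter_forall _ _ (fun i z => S i (Defs.down K Y z)) (nbhs y) _) => i.
  move: (Sy i); case: (Ssub i) => [[Q2 [HO ES]]|[D [cD [DY ES]]]].
    case: HO => Q1 [oQ1 EO]; rewrite ES EO.
    move=> [_ [u [[Yu Kyu] [Q1u Yu']]]].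
    have nO : nbhs u (Q1 `&` Y).
      by move: (openI oQ1 oY); rewrite openE; apply.
    have ct : {for y, continuous (fun z : V => u + (z - y))}.
      apply: continuousD; first exact: cst_continuous.
      by apply: continuousB => //; apply: cst_continuous.
    have fy : u + (y - y) = u by rewrite subrr addr0.
    have := ct (Q1 `&` Y); rewrite fy => /(_ nO).
    move=> Hn; apply: (@filterS _ _ (nbhs_filter y) _ _ _ Hn) => z /= [Q1z Yz]; split; first exact: CY_down.
    exists (u + (z - y)); split => //; split => //.
    rewrite /cone_le opprD opprB addrCA [z + _]addrC subrK addrC.
    exact: Kyu.
  rewrite ES.
  move=> [_ Dy0].
  have cB := @closed_down y.
  have DB : D `&` [set u : 'rV[R]_n | K (y - u)] = set0.
    apply/seteqP; split => // d [Dd Bd].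
    have : (Defs.down K Y y `&` D) d by split => //; split => //; exact: DY.
    by rewrite Dy0.
  have [r r0 Hr] := sep cD cB DB.
  have : \forall z \near y, `|y - z| < r.
    by apply/nbhs_ballP; exists r => // z; rewrite -ball_normE.
  apply: filterS => z yz; split; first exact: CY_down.
  apply/seteqP; split => // d [[Yd Kzd] Dd].
  have Bb : K (y - (d + (y - z))).
    by rewrite opprD opprB addrCA [y + _]addrC subrK addrC.
  have := Hr _ _ Dd Bb.
  by rewrite opprD addrA subrr add0r opprB distrC leNgt yz.
have Hn := @filterI _ _ (nbhs_filter y) _ _ (nbhsY Yy) H1.
apply: (@filterS _ _ (nbhs_filter y) _ _ _ Hn) => z [Yz Sz]; split => //; split.
  by apply: SU; split => //; exact: CY_down.
by exists z.
Qed.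
Lemma geom (Q0 : set V) (y0 : V) : open Q0 -> Q0 y0 -> Y y0 ->
  exists Q1 D, [/\ open Q1 /\ compact D, D `<=` Y,
   (Defs.down K Y y0 `&` (Q1 `&` Y) !=set0), (Defs.down K Y y0 `&` D = set0) &
   forall y, Y y -> Defs.down K Y y `&` (Q1 `&` Y) !=set0 ->
     Defs.down K Y y `&` D = set0 -> Q0 y].
Proof.
move=> oQ0 Q0y0 Yy0.
have : nbhs y0 (Q0 `&` Y) by move: (openI oQ0 oY); rewrite openE; apply.
move=> /nbhs_ballP[eps /= eps0 epsW].
have Wb : forall z, `|y0 - z| < eps -> (Q0 `&` Y) z.
  by move=> z hz; apply: epsW; rewrite -ball_normE.
pose rho := eps / 2.
have rho0 : 0 < rho by rewrite divr_gt0.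
have rhoe : rho < eps by rewrite /rho ltr_pdivrMr // ltr_pMr // ltr1n.
case: iK => e /nbhs_ballP[re /= re0 reK].
have eK : forall w, `|e - w| < re -> K w.
  by move=> w hw; apply: reK; rewrite -ball_normE.
have Ke : K e by apply: eK; rewrite subrr normr0.
have [r r0 Hr] := cone_bound cc cK pK.
pose M := `|e| / r + `|e| + re.
have eM : `|e| <= M by rewrite /M addrAC; apply: ler_wpDl => //; rewrite addr_ge0 ?divr_ge0 // ltW.
have M0 : 0 <= M by apply: le_trans eM.
pose beta := rho / (M + 1).
have M10 : 0 < M + 1 by rewrite ltr_wpDl.
have beta0 : 0 < beta by rewrite divr_gt0.
have hbM : beta * M < rho.
  have -> : rho = beta * (M + 1) by rewrite /beta -mulrA mulVf ?mulr1 // gt_eqF.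
  by rewrite ltr_pM2l // ltrDl.
pose eta := beta / 2.
have eta0 : 0 < eta by rewrite divr_gt0.
pose epsi := beta * re / 4.
have epsi0 : 0 < epsi by rewrite divr_gt0 // mulr_gt0.
pose a := y0 - beta *: e.
pose c := y0 - eta *: e.
pose D := [set d : V | `|y0 - d| = rho /\ K (d - a)].
have DY : D `<=` Y by move=> d [hd _]; have [] := Wb d _ => //; rewrite hd.
have Yc : Y c.
  have [] // := Wb c; apply: lt_trans rhoe; apply: le_lt_trans hbM.
  rewrite /c opprB addrC subrK normrZ gtr0_norm //.
  apply: (@le_trans _ _ (beta * `|e|)); last by rewrite ler_pM2l.
  apply: ler_wpM2r => //; rewrite /eta ler_pdivrMr // ler_pMr // ler1n //.
have cD : compact D.
  apply: bounded_closed_compact.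
    exists (`|y0| + rho); split; first exact: num_real.
    move=> N hN d [hd _] /=.
    have E : y0 - (y0 - d) = d by rewrite opprB addrC subrK.
    rewrite -E; apply: le_trans (ler_normB _ _) _; rewrite hd ltW //.
  apply: (@closedI _ [set d : V | `|y0 - d| = rho] [set d : V | K (d - a)]).
    have ct : continuous (fun d : V => `|y0 - d|).
      move=> d; apply: (@continuous_comp _ _ _ (fun d : V => y0 - d) (fun v : V => `|v|)); last exact: norm_continuous.
      by apply: continuousB => //; exact: cst_continuous.
    exact: ((continuous_closedP _).1 ct _ (@closed_eq _ rho)).
  have ct : continuous (fun d : V => d - a).
    by move=> d; apply: (@continuousB _ _ _ id (fun=> a)); [exact: cvg_id | exact: cst_continuous].
  exact: ((continuous_closedP _).1 ct _ cK).
exists (ball c epsi : set V); exists D; split => //.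
- by split => //; exact: ball_open.
- exists c; split; first split => //.
rewrite /cone_le.     have -> : y0 - c = eta *: e by apply/rowP => j; rewrite !mxE; ring.
    apply: (KZ cc cK) => //; exact: ltW.
  by split => //; exact: ballxx.
- apply/seteqP; split => // d [[Yd Kyd] [hd Kda]].
  have := Hr _ _ Kda Kyd.
  have E1 : d - a + (y0 - d) = beta *: e by apply/rowP => j; rewrite !mxE; ring.
  rewrite E1 normrZ gtr0_norm // => H.
  have H2 : `|d - a| <= beta * `|e| / r by rewrite ler_pdivlMr // mulrC.
  have : `|y0 - d| <= beta * `|e| + beta * `|e| / r.
    have E2 : y0 - d = beta *: e - (d - a) by apply/rowP => j; rewrite !mxE; ring.
    rewrite E2; apply: le_trans (ler_normB _ _) _; rewrite normrZ gtr0_norm // lerD2l.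
    exact: H2.
  rewrite hd => H3.
  have : beta * `|e| + beta * `|e| / r <= beta * M.
    rewrite -mulrA -mulrDr ler_pM2l // /M addrC lerDl ltW //.
  move=> H4; have := le_lt_trans (le_trans H3 H4) hbM.
  by rewrite ltxx.
- move=> y Yy [u [[Yu Kyu] [cu _]]] miss.
  have cu' : `|c - u| < epsi by move: cu; rewrite -ball_normE.
  suff hy : `|y0 - y| < eps by case: (Wb y hy).
  rewrite ltNge; apply/negP => hy.
  pose f := fun t : R => `|y0 - (u + t *: (y - u))|.
  have hbe : beta = eta + eta by rewrite /eta -splitr.
  have f0 : f 0 < rho.
    rewrite /f scale0r addr0.
    have E : y0 - u = (y0 - c) + (c - u) by apply/rowP => j; rewrite !mxE; ring.
    rewrite E; apply: le_lt_trans (ler_normD _ _) _.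
    have Ey : y0 - c = eta *: e by rewrite /c; apply/rowP => j; rewrite !mxE; ring.
    rewrite Ey normrZ gtr0_norm //.
    apply: le_lt_trans hbM.
    apply: (@le_trans _ _ (eta * `|e| + epsi)); first by rewrite lerD2l ltW.
    rewrite /M !mulrDr.
    apply: (@le_trans _ _ (beta * `|e| + beta * re)).
      apply: lerD.
        by apply: ler_wpM2r => //; rewrite /eta ler_pdivrMr // ler_pMr // ler1n.
      by rewrite /epsi ler_pdivrMr // ler_pMr; [lra | rewrite mulr_gt0].
    have : 0 <= beta * (`|e| / r) by rewrite mulr_ge0 // ?divr_ge0 // ltW.
    lra.
  have f1 : rho <= f 1.
    rewrite /f; have -> : y0 - (u + 1 *: (y - u)) = y0 - y by apply/rowP => j; rewrite !mxE; ring.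
    exact: le_trans (ltW rhoe) hy.
  have cf : {within `[0, 1], continuous f}.
    apply: continuous_subspaceT => t; rewrite /f.
    apply: cvg_norm; apply: cvgB; first exact: cvg_cst.
    apply: cvgD; first exact: cvg_cst.
    by apply: cvgZ; [exact: cvg_id | exact: cvg_cst].
  have hv : Num.min (f 0) (f 1) <= rho <= Num.max (f 0) (f 1).
    by rewrite ge_min le_max (ltW f0) f1 orbT.
  have [t t01 ft] := IVT ler01 cf hv.
  move: t01; rewrite in_itv /= => /andP[t0 t1].
  pose d := u + t *: (y - u).
  have Kua : K (u - a).
    have -> : u - a = eta *: (e + eta^-1 *: (u - c)).
      rewrite scalerDr scalerA mulfV ?gt_eqF // scale1r /a /c hbe.
      by apply/rowP => j; rewrite !mxE; ring.
    apply: (KZ cc cK) (ltW eta0); apply: eK.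
    rewrite opprD addrA subrr add0r normrN normrZ gtr0_norm ?invr_gt0 // distrC.
    apply: (@lt_le_trans _ _ (eta^-1 * epsi)); first by rewrite ltr_pM2l ?invr_gt0.
    have -> : eta^-1 * epsi = re / 2.
      rewrite /eta /epsi; field; rewrite gt_eqF //.
    by rewrite ler_pdivrMr // ler_pMr // ler1n.
  have Dd : D d.
    split => //.
    have -> : d - a = (u - a) + t *: (y - u) by rewrite /d; apply/rowP => j; rewrite !mxE; ring.
    by apply: (K_add cc) => //; apply: (KZ cc cK).
  have Ddown : Defs.down K Y y d.
    split; first exact: DY.
    rewrite /cone_le; have -> : y - d = (1 - t) *: (y - u) by rewrite /d; apply/rowP => j; rewrite !mxE; ring.
    by apply: (KZ cc cK) => //; rewrite subr_ge0.
  have : (Defs.down K Y y `&` D) d by [].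
  by rewrite miss.
Qed.


Lemma open_part O : rel_open Y O -> rel_fell_open K Y (Defs.down K Y @` O).
Proof.
case=> Q0 [oQ0 ->].
pose U := [set A : set V | CY Y A /\ exists k (S : 'I_k -> set (set V)),
  (forall i, fell_subbasic Y (S i)) /\ (forall i, S i A) /\
  ([set B | CY Y B /\ forall i, S i B] `&` Cdown K Y `<=` Defs.down K Y @` (Q0 `&` Y))].
exists U; split.
  split; first by move=> A [].
  move=> A [CA [k [S [H1 [H2 H3]]]]]; exists k, S; split => //; split => //.
  by move=> B [CB SB]; split => //; exists k, S.
apply/seteqP; split.
  move=> _ [y [Q0y Yy] <-]; split; last by exists y.
  split; first exact: CY_down.
  have [Q1 [D [[oQ1 cD] DY hit miss main]]] := geom oQ0 Q0y Yy.
  pose S1 := [set A : set V | CY Y A /\ A `&` (Q1 `&` Y) !=set0].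
  pose S2 := [set A : set V | CY Y A /\ A `&` D = set0].
  exists 2, (fun i : 'I_2 => if val i == 0%N then S1 else S2).
  split.
    move=> [[|[|m]] hi] //=.
      by left; exists (Q1 `&` Y); split => //; exists Q1.
    by right; exists D.
  split.
    move=> [[|[|m]] hi] //=; split => //; exact: CY_down.
  move=> B [[CB SB] [y' [Yy' EB]]].
  have s1 := SB (@Ordinal 2 0 isT); have s2 := SB (@Ordinal 2 1 isT).
  move: s1 s2 => /= [_ h1] [_ h2].
  rewrite EB in h1 h2; exists y'; last by rewrite EB.
  by split => //; apply: main.
move=> A [[CA [k [S [_ [SA sub]]]]] [y [Yy EA]]].
by apply: sub; split => //; exists y.
Qed.

Lemma POTS : is_POTS K Y.
Proof.
split.
  by move=> x _; rewrite /cone_le subrr; exact: Kz.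
split.
  move=> x y _ _ h1 h2; apply/eqP; rewrite eq_sym -subr_eq0; apply/eqP; apply: pK => //.
  by rewrite opprB.
split.
  move=> x y z _ _ _ h1 h2; rewrite /cone_le.
  have -> : z - x = (z - y) + (y - x) by apply/rowP => j; rewrite !mxE; ring.
  exact: (K_add cc).
exists [set p : V * V | K (p.2 - p.1)]; split.
  have ct : continuous (fun p : V * V => p.2 - p.1).
    move=> p; apply: cvgB; [exact: cvg_snd | exact: cvg_fst].
  exact: ((continuous_closedP _).1 ct _ cK).
by apply/seteqP; split => [[x y] /= [? [? ?]]|[x y] /= [? [? ?]]].
Qed.

Lemma EMB : topo_order_embeds K Y.
Proof.
have ord : forall x y, Y x -> Y y -> (cone_le K x y <-> Defs.down K Y x `<=` Defs.down K Y y).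
  move=> x y Yx Yy; split.
    move=> h u [Yu hu]; split => //; rewrite /cone_le.
    have -> : y - u = (y - x) + (x - u) by apply/rowP => j; rewrite !mxE; ring.
    exact: (K_add cc).
  move=> h; have [] := h x; last by [].
  by split => //; rewrite /cone_le subrr; exact: Kz.
split; first by move=> y _; exact: CY_down.
split; first exact: ord.
split.
  move=> x y Yx Yy E.
  have h1 : cone_le K x y by apply/(ord _ _ Yx Yy); rewrite E.
  have h2 : cone_le K y x by apply/(ord _ _ Yy Yx); rewrite E.
  apply/eqP; rewrite eq_sym -subr_eq0; apply/eqP; apply: pK => //.
  by rewrite opprB.
split; first exact: cont_part.
exact: open_part.
Qed.

End Main.

Unset Implicit Arguments.
Theorem theorem3p4 (R : realType) (n : nat) (K Y : set 'rV[R]_n) :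
  (1 < n)%N ->
  convex_cone K -> pointed K -> closed K -> interior K !=set0 ->
  open Y -> Y !=set0 ->
  is_POTS K Y /\ topo_order_embeds K Y.
Proof.
move=> _ cc pK cK iK oY _; split; [exact: POTS | exact: EMB].
Qed.
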